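(* Let $G$ be a well-bicovered graph and let $e$ be an edge of $G$ incident with a vertex $y$ of degree $2$. Then the graph $G'$ obtained from $G$ by replacing the edge $e$ by a path of length three (i.e., subdividing $e$ with two new vertices) is well-bicovered.
   Context: All graphs are finite and simple; ''subgraph'' means induced subgraph. A graph is well-bicovered if every vertex-inclusion-maximal induced bipartite subgraph has the same order. *)

(* Defs.v *)
From mathcomp Require Import all_boot.
Set Implicit Arguments. Unset Strict Implicit. Unset Printing Implicit Defensive.

Definition simple_graph (T : finType) (g : rel T) : Prop :=
  symmetric g /\ irreflexive g.

Definition bipartite_set (T : finType) (g : rel T) (S : {set T}) : Prop :=
  exists c : T -> bool,
    forall u v, u \in S -> v \in S -> g u v -> c u != c v.

Definition maximal_bipartite_set (T : finType) (g : rel T) (S : {set T}) : Prop :=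
  bipartite_set g S /\
  forall S' : {set T}, S \subset S' -> bipartite_set g S' -> S' = S.

Definition well_bicovered (T : finType) (g : rel T) : Prop :=
  forall S1 S2 : {set T}, maximal_bipartite_set g S1 -> maximal_bipartite_set g S2 ->
    #|S1| = #|S2|.

(* Graph obtained from g by replacing edge {x,y} by the path x - a - b - y,
   with new vertices a = inr false, b = inr true. *)
Definition subdiv3 (T : finType) (g : rel T) (x y : T) : rel (T + bool)%type :=
  fun u v =>
    match u, v with
    | inl u', inl v' => g u' v' && ~~ (((u' == x) && (v' == y)) || ((u' == y) && (v' == x)))
    | inl u', inr b | inr b, inl u' => ((u' == x) && ~~ b) || ((u' == y) && b)
    | inr b1, inr b2 => b1 != b2
    end.

(* Main.v *)
Require Import Defs.
From mathcomp Require Import all_boot.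
Set Implicit Arguments. Unset Strict Implicit. Unset Printing Implicit Defensive.

Lemma card_split (T : finType) (S' : {set T + bool}) :
  #|S'| = #|[set t | inl t \in S']| + (inr false \in S') + (inr true \in S').
Proof.
rewrite -!sum1_card big_sumType /=.
rewrite -addnA; congr (_ + _).
  by apply: eq_bigl => t; rewrite inE.
rewrite big_mkcond big_bool /=.
by case: (inr true \in S'); case: (inr false \in S').
Qed.

Lemma add_vertex (U : finType) (h : rel U) (S : {set U}) (v u0 : U) :
  symmetric h -> irreflexive h -> bipartite_set h S ->
  (forall u, u \in S -> h v u -> u = u0) -> bipartite_set h (v |: S).
Proof.
move=> hs hi [c Hc] Hn.
exists (fun z => if z == v then ~~ c u0 else c z) => p q.
rewrite !in_setU1.
case: (eqVneq p v) => [->|pv]; case: (eqVneq q v) => [->|qv] /=.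
- by rewrite hi.
- move=> _ qS hvq. rewrite (Hn q qS hvq). by case: (c u0).
- move=> pS _ hpv. rewrite hs in hpv. rewrite (Hn p pS hpv). by case: (c u0).
- exact: Hc.
Qed.

Lemma bip_sub (U : finType) (h : rel U) (A B : {set U}) :
  bipartite_set h A -> B \subset A -> bipartite_set h B.
Proof.
move=> [c Hc] /subsetP sub; exists c => u v uB vB; exact: Hc (sub _ uB) (sub _ vB).
Qed.

Lemma subdiv3_sym (T : finType) (g : rel T) x y : symmetric g -> symmetric (subdiv3 g x y).
Proof.
move=> hs [u|b] [v|b'] //=.
- rewrite hs; congr (_ && ~~ _); rewrite orbC; congr (_ || _); apply andbC.
- by rewrite eq_sym.
Qed.

Lemma subdiv3_irr (T : finType) (g : rel T) x y : irreflexive g -> irreflexive (subdiv3 g x y).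
Proof. by move=> hi [u|b] /=; rewrite ?hi ?eqxx. Qed.

Lemma ext_bip (T : finType) (g : rel T) x y (S : {set T}) (S' : {set T + bool}) :
  g x y -> bipartite_set g S -> (forall t, inl t \in S' -> t \in S) ->
  bipartite_set (subdiv3 g x y) S'.
Proof.
move=> gxy [c Hc] HS.
pose ca := if x \in S then ~~ c x else c y.
exists (fun z => match z with inl t => c t | inr b => if b then ~~ ca else ca end).
have cxy : x \in S -> y \in S -> c x != c y by move=> xS yS; exact: Hc xS yS gxy.
move=> [u|b] [v|b'] Hu Hv /=.
- case/andP=> guv _. exact: Hc (HS _ Hu) (HS _ Hv) guv.
- case: b' Hv => Hv /=; rewrite ?andbF ?andbT ?orbF /= => /eqP E; subst u.
  + rewrite /ca; case: (boolP (x \in S)) => xS; last by case: (c y).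
    by have := cxy xS (HS _ Hu); case: (c x); case: (c y).
  + by rewrite /ca (HS _ Hu); case: (c x).
- case: b Hu => Hu /=; rewrite ?andbF ?andbT ?orbF /= => /eqP E; subst v.
  + rewrite /ca; case: (boolP (x \in S)) => xS; last by case: (c y).
    by have := cxy xS (HS _ Hv); case: (c x); case: (c y).
  + by rewrite /ca (HS _ Hv); case: (c x).
- by case: b b' {Hu Hv} => [] [] //=; case: ca.
Qed.

Lemma restr_bip (T : finType) (g : rel T) x y (S' : {set T + bool}) (M : {set T}) :
  bipartite_set (subdiv3 g x y) S' -> (forall t, t \in M -> inl t \in S') ->
  ~~ ((x \in M) && (y \in M)) -> bipartite_set g M.
Proof.
move=> [c Hc] HM nxy; exists (fun t => c (inl t)) => u v uM vM guv.
apply: Hc; rewrite ?HM //= guv /=.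
apply/negP; case/orP => /andP[/eqP eu /eqP ev]; subst u v; move: nxy; by rewrite uM vM.
Qed.

Lemma restr_bip2 (T : finType) (g : rel T) x y (S' : {set T + bool}) :
  bipartite_set (subdiv3 g x y) S' -> inr false \in S' -> inr true \in S' ->
  bipartite_set g [set t | inl t \in S'].
Proof.
move=> [c Hc] ha hb; exists (fun t => c (inl t)) => u v; rewrite !inE => uS vS guv.
case: (boolP (((u == x) && (v == y)) || ((u == y) && (v == x)))) => E.
- have hab : c (inr false) != c (inr true) by apply: Hc.
  case/orP: E => /andP[/eqP eu /eqP ev]; subst u v.
  + have h1 : c (inl x) != c (inr false) by apply: Hc => //=; rewrite eqxx.
    have h2 : c (inr true) != c (inl y) by apply: Hc => //=; rewrite eqxx orbT.
    move: hab h1 h2; case: (c (inl x)); case: (c (inl y)); case: (c (inr false)); by case: (c (inr true)).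
  + have h1 : c (inl x) != c (inr false) by apply: Hc => //=; rewrite eqxx.
    have h2 : c (inr true) != c (inl y) by apply: Hc => //=; rewrite eqxx orbT.
    move: hab h1 h2; case: (c (inl x)); case: (c (inl y)); case: (c (inr false)); by case: (c (inr true)).
- by apply: Hc => //=; rewrite guv E.
Qed.

Theorem mainTheorem12 (T : finType) (g : rel T) (x y : T) :
  simple_graph g ->
  well_bicovered g ->
  g x y ->
  #|[set z | g y z]| = 2 ->
  well_bicovered (subdiv3 g x y).
Proof.
move=> [hs hi] wb gxy deg2.
have gps := subdiv3_sym x y hs.
have gpi := subdiv3_irr x y hi.
have [w Hw] : exists w, forall u, g y u -> u != x -> u = w.
  have : #|[set z | g y z] :\ x| == 1.
    move: deg2; rewrite (cardsD1 x) inE hs gxy /=.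
    by rewrite add1n => [[->]].
  case/cards1P=> w Ew; exists w => u gyu ux.
  by apply/set1P; rewrite -Ew !inE ux gyu.
have xy : x != y by apply/eqP => E; move: gxy; rewrite E hi.
have key : forall S', maximal_bipartite_set (subdiv3 g x y) S' ->
    exists M, maximal_bipartite_set g M /\ #|S'| = #|M| + 2.
  move=> S' [bS' maxS'].
  set S := [set t | inl t \in S'].
  have card := card_split S'.
  have ext : bipartite_set g S ->
      bipartite_set (subdiv3 g x y) (S' :|: [set inr false; inr true]).
    move=> bS; apply: ext_bip gxy bS _ => t.
    by rewrite !inE /= ?orbF.
  case: (boolP ((inr false \in S') && (inr true \in S'))) => hab.
  - case/andP: hab => ha hb.
    exists S; split; last by rewrite card ha hb -addnA.
    split; first exact: restr_bip2 bS' ha hb.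
    move=> M' sub bM'.
    pose S'' := [set z : T + bool | match z with inl t => t \in M' | inr _ => true end].
    have E : S'' = S'.
      apply: maxS'; last first.
        apply: ext_bip gxy bM' _ => t; by rewrite inE.
      apply/subsetP => [[t|b]] tS; rewrite inE //.
      by apply: (subsetP sub); rewrite inE.
    apply/setP => t; rewrite [in RHS]inE -E inE //.
  - have nbS : ~ bipartite_set g S.
      move=> bS; have E := maxS' _ (subsetUl _ _) (ext bS).
      by move: hab; rewrite -E !inE !eqxx !orbT.
    have xyS : (x \in S) && (y \in S).
      apply/negPn/negP => H; apply: nbS; apply: restr_bip bS' _ H.
      by move=> t; rewrite inE.
    case/andP: xyS => xS yS.
    have one : (inr false \in S') || (inr true \in S').
      apply/negPn/negP; rewrite negb_or => /andP[na nb].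
      have Hn : forall u, u \in S' -> subdiv3 g x y (inr false) u -> u = inl x.
        move=> [t|b] uS /=; rewrite ?andbT ?andbF ?orbF.
          by move/eqP => ->.
        by case: b uS => //; rewrite (negbTE nb).
      have E := maxS' _ (subsetU1 (inr false) S') (add_vertex gps gpi bS' Hn).
      by move: na; rewrite -E in_setU1 eqxx.
    exists (S :\ y); split; last first.
      rewrite card (cardsD1 y S) yS.
      by move: one hab; case: (inr false \in S'); case: (inr true \in S') => //= _ _; rewrite add1n ?addn0 ?addn1 -addn2 addnC.
    split.
      apply: restr_bip bS' _ _; first by move=> t; rewrite !inE => /andP[].
      by rewrite !inE eqxx andbF.
    move=> M' sub bM'.
    apply/eqP; rewrite eqEsubset sub andbT; apply/subsetP => v vM'.
    apply/negPn/negP => nv.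
    case: (eqVneq v y) => [ev|vy].
      apply: nbS; apply: bip_sub bM' _; apply/subsetP => t tS.
      case: (eqVneq t y) => [->|ty]; first by rewrite -ev.
      by apply: (subsetP sub); rewrite in_setD1 ty tS.
    have vS : v \notin S by move: nv; rewrite !inE vy.
    case: bM' => d Hd.
    have inM : forall t, inl t \in inl v |: S' -> t != y -> t \in M'.
      move=> t; rewrite in_setU1 => /orP[/eqP [->] //|tS] ty.
      by apply: (subsetP sub); rewrite !inE ty.
    have hab' : ~~ ((inr false \in inl v |: S') && (inr true \in inl v |: S')).
      by rewrite !in_setU1.
    have bS'' : bipartite_set (subdiv3 g x y) (inl v |: S').
      exists (fun z => match z with
                       | inl t => if t == y then ~~ d w else d t
                       | inr false => ~~ d x
                       | inr true => d w end).
      have yw : forall u, g y u -> u != x -> (if u == y then ~~ d w else d u) = d w.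
        move=> u gyu ux; have uy : u != y by apply/eqP => E; move: gyu; rewrite E hi.
        by rewrite (negbTE uy) (Hw u gyu ux).
      move=> [u|b] [u'|b'] Hu Hu' /=.
      + case/andP=> guu' ne.
        case: (eqVneq u y) => [eu|uy].
          subst u; rewrite yw //; first by case: (d w).
          by apply/eqP => E; move: ne; rewrite E !eqxx ?orbT /=.
        case: (eqVneq u' y) => [eu'|u'y].
          subst u'; rewrite hs in guu'; rewrite (Hw u guu'); first by case: (d w).
          by apply/eqP => E; move: ne; rewrite E !eqxx ?orbT /=.
        exact: Hd (inM _ Hu uy) (inM _ Hu' u'y) guu'.
      + case: b' Hu' => Hu' /=; rewrite ?andbF ?andbT ?orbF => /eqP E; subst u.
          by rewrite eqxx; case: (d w).
        by rewrite (negbTE xy); case: (d x).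
      + case: b Hu => Hu /=; rewrite ?andbF ?andbT ?orbF => /eqP E; subst u'.
          by rewrite eqxx; case: (d w).
        by rewrite (negbTE xy); case: (d x).
      + move=> bb'; exfalso; move: hab'.
        by case: b b' Hu Hu' bb' => [] [] // -> ->.
    have E := maxS' _ (subsetU1 (inl v) S') bS''.
    by move: vS; rewrite inE -E in_setU1 eqxx.
move=> S1 S2 /key [M1 [H1 ->]] /key [M2 [H2 ->]].
by rewrite (wb _ _ H1 H2).
Qed.
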